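(* Let $(X_{1,\infty},f_{1,\infty},\mu_{1,\infty})$ be a metric nonautonomous dynamical system and let $\mathcal{E}$ be the class of all sequences $\{\mathcal{P}_n\}$ of finite measurable partitions of $X_n$ for which there is $N\ge1$ with $\#\mathcal{P}_n\le N$ for all $n$. Then $\mathcal{E}$ is an admissible class, and it is maximal, i.e., there is no admissible class strictly containing it.
   Context: A metric NDS consists of probability spaces $(X_n,\mathcal{A}_n,\mu_n)$ and measurable maps $f_n:X_n\to X_{n+1}$ with $f_n\mu_n=\mu_{n+1}$; $f_k^n=f_{k+n-1}\circ\cdots\circ f_k$, $f_k^{-n}$ = preimage. An admissible class is a nonempty class $\mathcal{E}$ of sequences of finite measurable partitions $\{\mathcal{P}_n\}$ of $X_n$ such that (A) each member has $\#\mathcal{P}_n\le N$ for some $N$ and all $n$; (B) if $\mathcal{P}_{1,\infty}\in\mathcal{E}$ and $\mathcal{Q}_n$ is coarser than $\mathcal{P}_n$ for all $n$, then $\{\mathcal{Q}_n\}\in\mathcal{E}$; (C) if $\mathcal{P}_{1,\infty}\in\mathcal{E}$ and $m\ge1$ then $\{\bigvee_{i=0}^{m-1}f_k^{-i}\mathcal{P}_{k+i}\}_{k\ge1}\in\mathcal{E}$. *)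

(* Defs.v *)
From HB Require Import structures.
From mathcomp Require Import all_boot all_order all_algebra.
From mathcomp Require Import all_classical all_reals all_analysis.
Set Implicit Arguments. Unset Strict Implicit. Unset Printing Implicit Defensive.
Import Order.TTheory GRing.Theory Num.Theory.
Local Open Scope classical_set_scope.
Local Open Scope ring_scope.

Definition metric_NDS (R : realType) (d : nat -> measure_display)
  (X : forall n, measurableType (d n)) (mu : forall n, probability (X n) R)
  (f : forall n, X n -> X n.+1) : Prop :=
  forall n, measurable_fun setT (f n) /\
    (forall A : set (X n.+1), measurable A -> mu n.+1 A = mu n (f n @^-1` A)).

Fixpoint fiter (d : nat -> measure_display) (X : forall n, measurableType (d n))
  (f : forall n, X n -> X n.+1) (k i : nat) : X k -> X (i + k)%N :=
  match i return X k -> X (i + k)%N with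
  | 0 => fun x => x
  | i'.+1 => fun x => f (i' + k)%N (@fiter d X f k i' x)
  end.
Arguments fiter {d X} f k i.

Definition fin_meas_partition d (T : measurableType d) (P : set (set T)) : Prop :=
  finite_set P /\
  (forall A, P A -> measurable A /\ A !=set0) /\
  (forall A B, P A -> P B -> A `&` B !=set0 -> A = B) /\
  (forall x : T, exists2 A, P A & A x).

Definition card_le (T : Type) (P : set (set T)) (N : nat) : Prop :=
  exists g : nat -> set T, P `<=` [set g i | i in [set i : nat | (i < N)%N]].

Definition coarser (T : Type) (Q P : set (set T)) : Prop :=
  forall A, P A -> exists2 B, Q B & A `<=` B.

Definition partseq (d : nat -> measure_display) (X : forall n, measurableType (d n)) :=
  forall n, set (set (X n)).

Definition join_part (d : nat -> measure_display) (X : forall n, measurableType (d n))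
  (f : forall n, X n -> X n.+1) (P : partseq X) (m k : nat) : set (set (X k)) :=
  [set B | B !=set0 /\
     exists A : forall i, set (X (i + k)%N),
       (forall i, (i < m)%N -> P (i + k)%N (A i)) /\
       B = \bigcap_(i in [set i : nat | (i < m)%N]) (fiter f k i @^-1` A i)].
Arguments join_part {d X} f P m k.

Definition admissible (d : nat -> measure_display) (X : forall n, measurableType (d n))
  (f : forall n, X n -> X n.+1) (E : set (partseq X)) : Prop :=
  E !=set0 /\
  (forall P, E P -> forall n, fin_meas_partition (P n)) /\
  (* (A) *)
  (forall P, E P -> exists N : nat, forall n, card_le (P n) N) /\
  (* (B) *)
  (forall P Q : partseq X, E P ->
     (forall n, fin_meas_partition (Q n)) ->
     (forall n, coarser (Q n) (P n)) -> E Q) /\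
  (* (C) *)
  (forall P, E P -> forall m, (1 <= m)%N -> E (fun k => join_part f P m k)).

Definition bounded_class (d : nat -> measure_display) (X : forall n, measurableType (d n))
  : set (partseq X) :=
  [set P | (forall n, fin_meas_partition (P n)) /\
           exists N : nat, (1 <= N)%N /\ forall n, card_le (P n) N].
Arguments bounded_class {d} X.
Arguments admissible {d X} f E.
Arguments metric_NDS {R d X} mu f.

(* Main.v *)
Require Import Defs.
From HB Require Import structures.
From mathcomp Require Import all_boot all_order all_algebra.
From mathcomp Require Import all_classical all_reals all_analysis.
Local Open Scope classical_set_scope.
Local Notation card_le := Defs.card_le.

Lemma card_le_finite (T : Type) (P : set (set T)) N : card_le P N -> finite_set P.
Proof.
move=> [g Hg]; apply: (sub_finite_set Hg); apply: finite_image; exact: finite_II.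
Qed.

Lemma card_le_S (T : Type) (P : set (set T)) N : card_le P N -> card_le P N.+1.
Proof.
move=> [g Hg]; exists g => A /Hg [i Hi <-]; exists i => //=.
by rewrite /= in Hi *; apply: ltnW.
Qed.

Lemma coarser_card d (T : measurableType d) (Q P : set (set T)) N :
  fin_meas_partition P -> fin_meas_partition Q -> coarser Q P ->
  card_le P N -> card_le Q N.
Proof.
move=> [_ [HPm [HPd HPc]]] [_ [HQm [HQd HQc]]] Hc [g Hg].
pose g' i := match pselect (exists B, Q B /\ g i `<=` B) with
  | left e => proj1_sig (cid e) | right _ => set0 end.
exists g' => B QB.
have [x Bx] := (HQm B QB).2.
have [A PA Ax] := HPc x.
have [i Hi gA] := Hg A PA.
exists i => //.
rewrite /g'; case: pselect => [e|ne]; last first.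
  by exfalso; apply: ne; have [B' QB' AB'] := Hc A PA; exists B'; rewrite gA.
case: (cid e) => B' [QB' gB'] /=.
apply: HQd => //; exists x; split => //; apply: gB'; by rewrite gA.
Qed.

Lemma fiter_meas (d : nat -> measure_display) (X : forall n, measurableType (d n))
  (f : forall n, X n -> X n.+1) :
  (forall n, measurable_fun setT (f n)) ->
  forall k i, measurable_fun setT (fiter f k i).
Proof.
move=> Hf k; elim=> [|i IH] /=; first exact: measurable_id.
exact: (measurableT_comp (Hf _) IH).
Qed.

Lemma join_props (d : nat -> measure_display) (X : forall n, measurableType (d n))
  (f : forall n, X n -> X n.+1) (P : partseq X) N m :
  (forall n, measurable_fun setT (f n)) ->
  (forall n, fin_meas_partition (P n)) ->
  (forall n, card_le (P n) N) ->
  forall k, fin_meas_partition (join_part f P m k) /\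
    card_le (join_part f P m k) (size (enum {ffun 'I_m -> 'I_N})).+1.
Proof.
move=> Hf HP HN k.
have Hcard : card_le (join_part f P m k) (size (enum {ffun 'I_m -> 'I_N})).+1.
  pose G n := proj1_sig (cid (HN n)).
  have HG n : P n `<=` [set G n i | i in [set i : nat | (i < N)%N]].
    exact: (proj2_sig (cid (HN n))).
  pose Bof (c : {ffun 'I_m -> 'I_N}) : set (X k) :=
    [set x | forall i (Hi : (i < m)%N), G (i + k)%N (c (Ordinal Hi)) (fiter f k i x)].
  exists (fun j => nth set0 [seq Bof c | c <- enum {ffun 'I_m -> 'I_N}] j).
  move=> B [_ [A [HA ->]]].
  have ex (i : 'I_m) : exists j : 'I_N, G (val i + k)%N j = A (val i).
    have [j Hj Gj] := HG _ _ (HA _ (ltn_ord i)).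
    by exists (Ordinal Hj).
  pose c := [ffun i => proj1_sig (cid (ex i))].
  have Hc i (Hi : (i < m)%N) : G (i + k)%N (c (Ordinal Hi)) = A i.
    rewrite ffunE; exact: (proj2_sig (cid (ex (Ordinal Hi)))).
  have Hin : c \in enum {ffun 'I_m -> 'I_N} by rewrite mem_enum.
  exists (index c (enum {ffun 'I_m -> 'I_N})).
    by rewrite /= ltnS ltnW // index_mem.
  rewrite /= (nth_map c) ?index_mem // nth_index //.
  apply/seteqP; split => x /=.
    by move=> Hx i /= Hi; have := Hx i Hi; rewrite Hc.
  move=> Hx i Hi; rewrite Hc; exact: Hx.
split => //.
split; first exact: card_le_finite Hcard.
split.
  move=> B [B0 [A [HA EB]]]; split => //; rewrite EB.
  apply: bigcap_measurableType => i /= Hi.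
  have := @fiter_meas _ _ f Hf k i measurableT _ ((proj1 (proj2 (HP _))) _ (HA _ Hi)).1.
  by rewrite setTI.
split.
  move=> B1 B2 [_ [A1 [HA1 ->]]] [_ [A2 [HA2 ->]]] [x [Hx1 Hx2]].
  have E i : (i < m)%N -> A1 i = A2 i.
    move=> Hi; apply: (proj1 (proj2 (proj2 (HP (i + k)%N)))); [exact: HA1|exact: HA2|].
    by exists (fiter f k i x); split; [exact: Hx1|exact: Hx2].
  apply/seteqP; split => y Hy i Hi; [rewrite -E //|rewrite E //]; exact: Hy.
move=> x.
pose A i := proj1_sig (cid2 ((proj2 (proj2 (proj2 (HP (i + k)%N)))) (fiter f k i x))).
have HA i : P (i + k)%N (A i) /\ A i (fiter f k i x).
  by case: (proj2_sig (cid2 ((proj2 (proj2 (proj2 (HP (i + k)%N)))) (fiter f k i x)))).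
exists (\bigcap_(i in [set i : nat | (i < m)%N]) (fiter f k i @^-1` A i)).
  split; first by exists x => i _; exact: (HA i).2.
  by exists A; split => // i _; exact: (HA i).1.
by move=> i _; exact: (HA i).2.
Qed.

Theorem mainTheorem10 (R : realType) (d : nat -> measure_display)
  (X : forall n, measurableType (d n)) (mu : forall n, probability (X n) R)
  (f : forall n, X n -> X n.+1) :
  metric_NDS mu f ->
  admissible f (bounded_class X) /\
  (forall E' : set (partseq X), admissible f E' ->
     bounded_class X `<=` E' -> E' = bounded_class X).
Proof.
move=> HNDS.
have Hf n : measurable_fun setT (f n) by exact: (HNDS n).1.
split.
  split.
    exists (fun n => [set setT]); split.
      move=> n; split; first exact: finite_set1.
      split; first by move=> A ->; split => //; exists point.
      split; first by move=> A B -> ->.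
      by move=> x; exists setT.
    exists 1%N; split => // n; exists (fun _ => setT) => A ->; exists 0%N => //.
  split; first by move=> P [HP _].
  split; first by move=> P [_ [N [_ H]]]; exists N.
  split.
    move=> P Q [HP [N [N1 HN]]] HQ Hc; split => //; exists N; split => // n.
    exact: coarser_card (HP n) (HQ n) (Hc n) (HN n).
  move=> P [HP [N [_ HN]]] m m1; split.
    by move=> k; exact: (@join_props _ _ f P N m Hf HP HN k).1.
  exists (size (enum {ffun 'I_m -> 'I_N})).+1; split => // k.
  exact: (@join_props _ _ f P N m Hf HP HN k).2.
move=> E' [_ [HE1 [HE2 _]]] Hsub.
apply/seteqP; split => // P HP; split; first exact: HE1.
have [N HN] := HE2 P HP; exists N.+1; split => // n; exact: card_le_S.
Qed.
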